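(* For every integer $N\ge1$, $D^{\mathcal{PARITY}}({\rm MAJORITY})=D^{\rm XOR}({\rm MAJORITY})=N+1-w(N)$, where ${\rm MAJORITY}$ is on $N$-bit inputs.
   Context: For $X=X_0X_1\cdots X_{N-1}\in\{0,1\}^N$, ${\rm MAJORITY}(X)=0$ if $X$ contains more zeros than ones and ${\rm MAJORITY}(X)=1$ otherwise. $w(N)$ denotes the number of ones in the binary representation of $N$. A $\mathcal{PARITY}$-decision tree on $N$-bit inputs is a deterministic adaptive algorithm that on input $X$ makes a sequence of queries, each being the parity $\bigoplus_{i\in T}X_i$ for some nonempty $T\subseteq\{0,\dots,N-1\}$, each chosen depending on previous answers, and then outputs a value; an XOR decision tree is the same but each query must be either a single bit $X_i$ or $X_i\oplus X_j$ for some $i,j$. The cost is the maximum over inputs of the number of queries. $D^{\mathcal{PARITY}}(f)$ (resp. $D^{\rm XOR}(f)$) is the minimum cost of a $\mathcal{PARITY}$-decision tree (resp. XOR decision tree) that outputs $f(X)$ on every input $X$. *)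

(* Defs.v *)
From mathcomp Require Import all_boot.
Set Implicit Arguments. Unset Strict Implicit. Unset Printing Implicit Defensive.

Definition input (N : nat) := {ffun 'I_N -> bool}.

Definition ones N (X : input N) : nat := #|[set i | X i]|.

Definition majority N (X : input N) : bool := ~~ (ones X < N - ones X).

(* w(N) : number of ones in binary representation of N
   (bits of index >= N+1 are zero since N < 2^(N+1)) *)
Definition w (N : nat) : nat := \sum_(i < N.+1) ((N %/ 2 ^ i) %% 2).

(* Adaptive deterministic algorithms with parity queries, as binary trees:
   a node queries the parity of X on T, goes left on answer false,
   right on answer true. *)
Inductive qtree (N : nat) : Type :=
| Leaf of bool
| Query of {set 'I_N} & qtree N & qtree N.

Definition parity N (T : {set 'I_N}) (X : input N) : bool :=
  \big[addb/false]_(i in T) X i.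

Fixpoint eval N (t : qtree N) (X : input N) : bool :=
  match t with
  | Leaf b => b
  | Query T l r => if parity T X then eval r X else eval l X
  end.

Fixpoint nqueries N (t : qtree N) (X : input N) : nat :=
  match t with
  | Leaf _ => 0
  | Query T l r => (if parity T X then nqueries r X else nqueries l X).+1
  end.

Definition cost N (t : qtree N) : nat := \max_(X : input N) nqueries t X.

Fixpoint all_queries N (P : {set 'I_N} -> bool) (t : qtree N) : bool :=
  match t with
  | Leaf _ => true
  | Query T l r => [&& P T, all_queries P l & all_queries P r]
  end.

Definition parity_tree N (t : qtree N) : bool :=
  all_queries (fun T => T != set0) t.

(* XOR trees: queries X_i (|T| = 1) or X_i xor X_j (|T| = 2, i <> j;
   the case i = j would be the constant query 0, which is useless) *)
Definition xor_tree N (t : qtree N) : bool :=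
  all_queries (fun T => (#|T| == 1) || (#|T| == 2)) t.

Definition computes N (t : qtree N) (f : input N -> bool) : Prop :=
  forall X, eval t X = f X.

Definition is_Dcomplexity N (valid : qtree N -> bool) (f : input N -> bool)
  (k : nat) : Prop :=
  (exists t, valid t /\ computes t f /\ cost t = k) /\
  (forall t, valid t -> computes t f -> k <= cost t).

Definition D_PARITY_is N (f : input N -> bool) (k : nat) : Prop :=
  is_Dcomplexity (@parity_tree N) f k.

Definition D_XOR_is N (f : input N -> bool) (k : nat) : Prop :=
  is_Dcomplexity (@xor_tree N) f k.

(* Main.v *)
Require Import Defs.
From mathcomp Require Import all_boot all_algebra zify ring.
Set Implicit Arguments. Unset Strict Implicit. Unset Printing Implicit Defensive.

Lemma bits_zero n i : n < 2 ^ i -> (n %/ 2 ^ i) %% 2 = 0.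
Proof. by move=> h; rewrite divn_small. Qed.

Lemma w_big n K : n < 2 ^ K -> w n = \sum_(i < K) ((n %/ 2 ^ i) %% 2).
Proof.
move=> hK.
have gen : forall M, K <= M -> \sum_(i < M) ((n %/ 2 ^ i) %% 2) = \sum_(i < K) ((n %/ 2 ^ i) %% 2).
  elim=> [|M IH] hM; first by have -> : K = 0 by lia.
  case: (ltnP K M.+1) => h.
    rewrite big_ord_recr /= IH; last by lia.
    rewrite bits_zero ?addn0 //.
    apply: (leq_trans hK); rewrite leq_exp2l //; lia.
  by have -> : K = M.+1 by lia.
have gen2 : forall M, n < 2 ^ M -> forall M', M <= M' -> \sum_(i < M') ((n %/ 2 ^ i) %% 2) = \sum_(i < M) ((n %/ 2 ^ i) %% 2).
  move=> M hM; elim=> [|M' IH] hM'; first by have -> : M = 0 by lia.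
  case: (ltnP M M'.+1) => h.
    rewrite big_ord_recr /= IH; last by lia.
    rewrite bits_zero ?addn0 //.
    apply: (leq_trans hM); rewrite leq_exp2l //; lia.
  by have -> : M = M'.+1 by lia.
rewrite /w.
have hn : n < 2 ^ n.+1 by apply: (ltn_trans (ltn_expl n (isT : 1 < 2))); rewrite ltn_exp2l.
case: (leqP K n.+1) => h.
  by rewrite (gen2 K hK n.+1 h).
by rewrite -(gen2 n.+1 hn K (ltnW h)).
Qed.

Lemma wE n : w n = odd n + w n./2.
Proof.
have hn : n < 2 ^ n.+1 by apply: (ltn_trans (ltn_expl n (isT : 1 < 2))); rewrite ltn_exp2l.
rewrite (w_big hn) (w_big (K := n)); last first.
  have := ltn_expl n (isT : 1 < 2); rewrite -divn2; move=> h.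
  apply: (leq_ltn_trans (leq_div _ _) h).
rewrite big_ord_recl /= expn0 divn1 modn2; congr (_ + _).
apply: eq_bigr => i _; rewrite /bump /= add1n expnS divnMA divn2 //.
Qed.

Lemma w0 : w 0 = 0.
Proof. by rewrite /w big_ord_recl big_ord0. Qed.

Lemma w_double m : w m.*2 = w m.
Proof. by rewrite wE odd_double doubleK. Qed.

Lemma w_doubleS m : w m.*2.+1 = (w m).+1.
Proof. by rewrite wE /= odd_double /= uphalf_double. Qed.

Lemma w_pow k : w (2 ^ k) = 1.
Proof.
elim: k => [|k IH]; first by rewrite expn0 wE /= w0.
by rewrite expnS mul2n w_double.
Qed.

Lemma w1 : w 1 = 1.
Proof. exact: (w_pow 0). Qed.

Lemma w_pos n : 0 < n -> 0 < w n.
Proof.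
elim: n {-2}n (leqnn n) => [|n IH] m hm hpos; first by lia.
rewrite wE; case: (boolP (odd m)) => ho //=.
rewrite add0n; apply: IH.
  rewrite -divn2; apply: (leq_trans (n := m %/ 2)).  apply: leqnn.
  have : m %/ 2 < m by rewrite ltn_Pdiv.
  lia.
have := odd_double_half m; rewrite (negbTE ho) add0n; case: (m./2) => //=.
move=> h; lia.
Qed.

Lemma w_sub_aux n : forall a b c, a + b <= n -> c <= 1 -> w (a + b + c) <= w a + w b + c.
Proof.
elim: n => [|n IH] a b c hab hc.
  have -> : a = 0 by lia. have -> : b = 0 by lia.
  rewrite w0; case: c hc => [|[|]] //= _; rewrite ?w0 ?w1 //. 
case: (posnP (a + b)) => h0.
  have -> : a = 0 by lia. have -> : b = 0 by lia.
  rewrite w0; case: c hc => [|[|]] //= _; rewrite ?w0 ?w1 //. 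
rewrite (wE a) (wE b) (wE (a + b + c)).
have ea := odd_double_half a. have eb := odd_double_half b.
set a2 := a./2 in ea *. set b2 := b./2 in eb *.
have ha2 : a2 + b2 <= n.
  have : a2 + b2 < a + b by move: ea eb; rewrite -!addnn; lia.
  lia.
have s := odd_double_half (a + b + c).
have hsum : (a + b + c) = (odd a + odd b + c) + (a2 + b2).*2 by rewrite -{1}ea -{1}eb; rewrite doubleD; lia.
set t := odd a + odd b + c in hsum.
have ht : t <= 3 by rewrite /t; case: (odd a); case: (odd b); lia.
have [o h2] : odd (a + b + c) = odd t /\ (a + b + c)./2 = a2 + b2 + t./2.
  rewrite hsum oddD odd_double addbF; split=> //.
  by rewrite -!divn2 -muln2 addnC divnMDl // addnC.
rewrite o h2.
have IH0 := IH a2 b2 0 ha2 isT. have IH1 := IH a2 b2 1 ha2 isT.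
rewrite addn0 in IH0.
rewrite /t; clear -IH0 IH1 hc; case: (odd a); case: (odd b); case: c hc => [|[|]] //= _; rewrite ?addn0; lia.
Qed.

Lemma w_add a b : w (a + b) <= w a + w b.
Proof. by have := @w_sub_aux (a + b) a b 0 (leqnn _) isT; rewrite !addn0. Qed.

Lemma logn2_double m : 0 < m -> logn 2 m.*2 = (logn 2 m).+1.
Proof.
move=> hm; rewrite lognE /= double_gt0 hm -muln2 dvdn_mull //=.
by rewrite mulnK.
Qed.

Lemma logn2_odd m : odd m -> logn 2 m = 0.
Proof.
move=> hm; rewrite lognE /=.
by rewrite dvdn2 hm andbF.
Qed.

Lemma carry n : logn 2 n.+1 + w n.+1 = (w n).+1.
Proof.
elim: n {-2}n (leqnn n) => [|k IH] n hn.
  have -> : n = 0 by lia. by rewrite logn1 w0 w1.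
have e := odd_double_half n.
case: (boolP (odd n)) => ho; [rewrite ho in e | rewrite (negbTE ho) in e].
- set q := n./2 in e.
  have -> : n.+1 = (q.+1).*2 by rewrite -e /= doubleS; lia.
  rewrite logn2_double // w_double -e w_doubleS.
  have : q < n.+1 by rewrite -e; rewrite -addnn; lia.
  move=> hq; rewrite -(IH q); last by lia.
  lia.
- set q := n./2 in e.
  have -> : n.+1 = q.*2.+1 by rewrite -e.
  rewrite logn2_odd ?w_doubleS /=; last by rewrite odd_double.
  by rewrite -e /= w_double.
Qed.

Lemma legendre n : logn 2 n`! + w n = n.
Proof.
elim: n => [|n IH]; first by rewrite fact0 logn1 w0.
rewrite factS lognM // ?fact_gt0 //.
have := carry n; lia.
Qed.

Lemma logn_central m : logn 2 'C(m.*2, m) = w m.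
Proof.
have h := bin_fact (leq_addr m m).
rewrite -addnn in h *.
have ef : logn 2 ('C(m + m, m) * (m`! * (m + m - m)`!)) = logn 2 (m + m)`! by rewrite h.
rewrite addnK in ef.
rewrite lognM ?muln_gt0 ?fact_gt0 ?bin_gt0 ?leq_addr // lognM ?fact_gt0 // in ef.
have l1 := legendre m. have l2 := legendre (m + m).
rewrite addnn w_double in l2.
rewrite -addnn in l2.
lia.
Qed.

Fixpoint findpair N (s : seq ('I_N * nat)) :
  option (('I_N * nat) * ('I_N * nat) * seq ('I_N * nat)) :=
  match s with
  | [::] => None
  | x :: s' =>
    if has (fun y => y.2 == x.2) s' then
      let y := nth x s' (find (fun y => y.2 == x.2) s') in Some (x, y, rem y s')
    else match findpair s' with
         | Some (a, b, r) => Some (a, b, x :: r)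
         | None => None
         end
  end.

Definition top N (x : 'I_N * nat) (s : seq ('I_N * nat)) :=
  foldr (fun y m => if m.2 < y.2 then y else m) x s.

Definition final N (s : seq ('I_N * nat)) : qtree N :=
  match s with
  | [::] => @Leaf N true
  | x :: s' => Query [set (top x s').1] (@Leaf N false) (@Leaf N true)
  end.

Fixpoint build N (f : nat) (s : seq ('I_N * nat)) : qtree N :=
  match f with
  | 0 => final s
  | f'.+1 =>
    match findpair s with
    | Some (a, b, r) => Query [set a.1; b.1] (build f' ((a.1, a.2.+1) :: r)) (build f' r)
    | None => final s
    end
  end.

Lemma findpair_some N (s : seq ('I_N * nat)) a b r :
  findpair s = Some (a, b, r) -> perm_eq s [:: a, b & r] /\ a.2 = b.2.
Proof.
elim: s a b r => [|x s IH] a b r //=.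
case: ifP => hh.
  move=> [<- <- <-]; split.
    by rewrite perm_cons; apply: perm_to_rem; apply: mem_nth; rewrite -has_find.
  by have /eqP := nth_find x hh.
case e: (findpair s) => [[[a' b'] r']|] // [<- <- <-].
have [hp he] := IH _ _ _ e; split=> //.
apply: (@perm_trans _ (x :: [:: a', b' & r'])); first by rewrite perm_cons.
by rewrite -[x :: _]/([:: x] ++ [:: a'; b'] ++ r') perm_catCA.
Qed.

Lemma findpair_none N (s : seq ('I_N * nat)) :
  findpair s = None -> uniq (map snd s).
Proof.
elim: s => [|x s IH] //=.
case: ifP => hh //.
case e: (findpair s) => [[[a' b'] r']|] // _.
rewrite IH // andbT; apply/mapP => [[y hy ey]].
move/negbT: hh => /hasPn /(_ y hy); by rewrite ey eqxx.
Qed.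

Lemma top_in N (x : 'I_N * nat) s : top x s \in x :: s.
Proof.
elim: s => [|y s IH] /=; first by rewrite inE.
case: ifP => _; first by rewrite !inE eqxx orbT.
move: IH; rewrite !inE; case/orP=> -> //; by rewrite !orbT.
Qed.

Lemma top_max N (x : 'I_N * nat) s p : p \in x :: s -> p.2 <= (top x s).2.
Proof.
elim: s p => [|y s IH] p /=; first by rewrite inE => /eqP ->.
rewrite !inE => hp.
rewrite -/(top x s).
case: ifP => h.
  case/or3P: hp => [/eqP->|/eqP->|hp].
  - exact: leq_trans (IH x (mem_head _ _)) (ltnW h).
  - by [].
  - by apply: leq_trans (IH p _) (ltnW h); rewrite inE hp orbT.
case/or3P: hp => [/eqP->|/eqP->|hp]; first by apply: IH; rewrite mem_head.
  by rewrite leqNgt h.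
by apply: IH; rewrite inE hp orbT.
Qed.

Definition Msum N (s : seq ('I_N * nat)) := \sum_(p <- s) 2 ^ p.2.
Definition Psum N (X : input N) (s : seq ('I_N * nat)) := \sum_(p <- s | X p.1) 2 ^ p.2.
Definition Qsum N (X : input N) (s : seq ('I_N * nat)) := \sum_(p <- s | ~~ X p.1) 2 ^ p.2.

Lemma size_w N (s : seq ('I_N * nat)) : w (Msum s) <= size s.
Proof.
elim: s => [|x s IH]; first by rewrite /Msum big_nil w0.
rewrite /Msum big_cons -/(Msum s) /=.
have := w_add (2 ^ x.2) (Msum s); rewrite w_pow; lia.
Qed.

Lemma uniq_rem_neq N (s : seq ('I_N * nat)) p q :
  uniq (map snd s) -> p \in s -> q \in rem p s -> q.2 != p.2.
Proof.
move=> hu hp hq.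
have hperm := perm_to_rem hp.
have := hu; rewrite (perm_uniq (perm_map snd hperm)) /= => /andP [hn _].
apply/eqP => e; move/negP: hn; apply; rewrite -e; exact: map_f.
Qed.

Lemma pow_sum_lt K : forall N (s : seq ('I_N * nat)),
  uniq (map snd s) -> (forall p, p \in s -> p.2 < K) -> Msum s < 2 ^ K.
Proof.
elim: K => [|K IH] N s hu hK.
  case: s hu hK => [|x s] _ hK; first by rewrite /Msum big_nil.
  by have := hK x (mem_head _ _).
case: (boolP (has (fun p => p.2 == K) s)) => hh.
  have [p hp /eqP hpK] := hasP hh.
  rewrite /Msum (perm_big _ (perm_to_rem hp)) big_cons -/(Msum _).
  have hu' : uniq (map snd (rem p s)).
    by move: hu; rewrite (perm_uniq (perm_map snd (perm_to_rem hp))) /= => /andP [].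
  have : Msum (rem p s) < 2 ^ K.
    apply: IH => // q hq.
    have := uniq_rem_neq hu hp hq; rewrite hpK.
    have := hK q (mem_rem hq); lia.
  rewrite hpK expnS => hl; change (2 ^ K + Msum (rem p s) < 2 * 2 ^ K); lia.
have : Msum s < 2 ^ K.
  apply: IH => // q hq.
  move/hasPn: hh => /(_ q hq) hne; have := hK q hq.
  by rewrite ltnS leq_eqVlt (negbTE hne).
move=> hl; rewrite expnS; lia.
Qed.

Lemma parity1 N (a : 'I_N) X : parity [set a] X = X a.
Proof. by rewrite /parity big_set1. Qed.

Lemma parity2 N (a b : 'I_N) X : a != b -> parity [set a; b] X = X a (+) X b.
Proof.
move=> hab; rewrite /parity big_setU1 ?big_set1 //.
by rewrite inE.
Qed.

Definition Inv N (X : input N) (s : seq ('I_N * nat)) :=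
  ones X + Qsum X s = (N - ones X) + Psum X s.

Lemma Psum_le N X (s : seq ('I_N * nat)) : Psum X s <= Msum s.
Proof. by rewrite /Psum /Msum [X in _ <= X]big_mkcond /= big_mkcond; apply: leq_sum => i _; case: ifP. Qed.

Lemma Qsum_le N X (s : seq ('I_N * nat)) : Qsum X s <= Msum s.
Proof. by rewrite /Qsum /Msum [X in _ <= X]big_mkcond /= big_mkcond; apply: leq_sum => i _; case: ifP. Qed.

Lemma final_correct N (s : seq ('I_N * nat)) X :
  uniq (map snd s) -> Inv X s -> eval (final s) X = majority X.
Proof.
rewrite /Inv /majority.
case: s => [|x s'] hu.
  by rewrite /Psum /Qsum !big_nil /= !addn0 => h; rewrite -h ltnn.
set m := top x s'.
have hm : m \in x :: s' := top_in x s'.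
set r := rem m (x :: s').
have hp := perm_to_rem hm.
have hlt : Msum r < 2 ^ m.2.
  apply: pow_sum_lt.
    by move: hu; rewrite (perm_uniq (perm_map snd hp)) /= => /andP [].
  move=> q hq.
  have h1 := uniq_rem_neq hu hm hq.
  have h2 := top_max (mem_rem hq).
  rewrite -/m in h2.
  by rewrite ltn_neqAle h1 h2.
have hP := Psum_le X r. have hQ := Qsum_le X r.
rewrite /Psum /Qsum (perm_big _ hp) [X in _ = _ + X](perm_big _ hp) !big_cons -/(Psum X r) -/(Qsum X r) /=.
rewrite parity1 -/m.
case: (X m.1) => /=; lia.
Qed.

Lemma perm_fst N (s : seq ('I_N * nat)) a b r :
  perm_eq s [:: a, b & r] -> uniq (map fst s) ->
  [/\ a.1 != b.1, a.1 \notin map fst r & uniq (map fst r)].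
Proof.
move=> hp; rewrite (perm_uniq (perm_map fst hp)) /= !inE negb_or.
by case/and3P => /andP [-> ->] _ ->.
Qed.

Lemma build_correct N f (s : seq ('I_N * nat)) X :
  size s <= f -> uniq (map fst s) -> Inv X s -> eval (build f s) X = majority X.
Proof.
elim: f s => [|f IH] s hs hu hI.
  by case: s hs hu hI => // _ _; apply: final_correct.
rewrite /=.
case e: (findpair s) => [[[a b] r]|]; last first.
  by apply: final_correct => //; apply: findpair_none.
have [hp hab] := findpair_some e.
have [hne hnr hur] := perm_fst hp hu.
have hsz : size s = (size r).+2 by rewrite (perm_size hp).
move: hI; rewrite /Inv /Psum /Qsum (perm_big _ hp) [X in _ = _ + X](perm_big _ hp) !big_cons /=.
rewrite -/(Psum X r) -/(Qsum X r) parity2 // => hI.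
case ha: (X a.1); case hb: (X b.1); rewrite ha hb /= in hI *.
- apply: IH; rewrite /= ?hnr ?hur //; first by lia.
  rewrite /Inv /Psum /Qsum !big_cons /= ha -/(Psum X r) -/(Qsum X r).
  rewrite expnS -hab in hI *; rewrite /=; lia.
- apply: IH => //; first by lia.
  rewrite /Inv; rewrite -hab in hI; lia.
- apply: IH => //; first by lia.
  rewrite /Inv; rewrite -hab in hI; lia.
- apply: IH; rewrite /= ?hnr ?hur //; first by lia.
  rewrite /Inv /Psum /Qsum !big_cons /= ha -/(Psum X r) -/(Qsum X r).
  rewrite expnS -hab in hI *; rewrite /=; lia.
Qed.

Lemma build_valid N f (s : seq ('I_N * nat)) :
  uniq (map fst s) -> xor_tree (build f s).
Proof.
rewrite /xor_tree.
elim: f s => [|f IH] s hu.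
  by case: s hu => [|x s'] //= _; rewrite cards1 eqxx.
rewrite /=.
case e: (findpair s) => [[[a b] r]|]; last first.
  by case: s hu e => [|x s'] //= _; rewrite cards1 eqxx.
have [hp hab] := findpair_some e.
have [hne hnr hur] := perm_fst hp hu.
rewrite /= cards2 hne /=.
by rewrite !IH //= hnr hur.
Qed.

Lemma build_cost N f (s : seq ('I_N * nat)) X :
  nqueries (build f s) X <= size s + 1 - w (Msum s).
Proof.
elim: f s => [|f IH] s.
  case: s => [|x s'] //=; have := size_w (x :: s'); case: (parity _ _) => /=; lia.
rewrite /=.
case e: (findpair s) => [[[a b] r]|]; last first.
  case: s e => [|x s'] //= _; have := size_w (x :: s'); case: (parity _ _) => /=; lia.
have [hp hab] := findpair_some e.
have hsz : size s = (size r).+2 by rewrite (perm_size hp).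
have hM : Msum s = 2 ^ a.2.+1 + Msum r.
  rewrite /Msum (perm_big _ hp) !big_cons -/(Msum r) /= expnS -hab; lia.
have hr := size_w r.
have hw := w_add (2 ^ a.2.+1) (Msum r). rewrite w_pow -hM in hw.
have hw2 := size_w s.
rewrite /=; case: ifP => _.
  have := IH r; lia.
have := IH ((a.1, a.2.+1) :: r).
have -> : Msum ((a.1, a.2.+1) :: r) = Msum s by rewrite hM /Msum big_cons.
rewrite /=; lia.
Qed.

Module LB.
Import GRing.Theory Num.Theory.
Local Open Scope ring_scope.

Definition chi N (S : {set 'I_N}) (x : input N) : int := if parity S x then -1 else 1.

Definition symd N (S T : {set 'I_N}) : {set 'I_N} := [set i | (i \in S) (+) (i \in T)].

Lemma parityE N (S : {set 'I_N}) x :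
  parity S x = \big[addb/false]_i ((i \in S) && x i).
Proof. by rewrite /parity big_mkcond; apply: eq_bigr => i _; case: (i \in S). Qed.

Lemma parity_symd N (S T : {set 'I_N}) x :
  parity (symd S T) x = parity S x (+) parity T x.
Proof.
rewrite !parityE -big_split /=; apply: eq_bigr => i _.
by rewrite inE; case: (i \in S); case: (i \in T); case: (x i).
Qed.

Lemma chi_symd N (S T : {set 'I_N}) x : chi (symd S T) x = chi S x * chi T x.
Proof. by rewrite /chi parity_symd; case: (parity S x); case: (parity T x). Qed.

Definition good N (P : pred (input N)) (k : nat) :=
  forall S, ((2 ^ k)%N%:Z %| \sum_(x | P x) chi S x)%Z.

Lemma half_dvd (k : nat) (Y : int) : ((2 ^ k)%N%:Z %| Y * 2)%Z -> ((2 ^ k.-1)%N%:Z %| Y)%Z.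
Proof.
case: k => [|k] /=; first by rewrite expn0 dvd1z.
by rewrite expnS mulnC PoszM dvdz_mul2r.
Qed.

Lemma good_restrict N (P : pred (input N)) k T b :
  good P k -> good (fun x => P x && (parity T x == b)) k.-1.
Proof.
move=> hg S; apply: half_dvd.
have -> : (\sum_(x | P x && (parity T x == b)) chi S x) * 2 =
   \sum_(x | P x) chi S x + (if b then -1 else 1) * \sum_(x | P x) chi (symd S T) x.
  rewrite big_mkcondr mulr_suml mulr_sumr -big_split /=; apply: eq_bigr => x _.
  rewrite chi_symd /chi; case: (parity S x); case: (parity T x); case: b => /=; lia.
apply: rpredD; [exact: hg | apply: dvdz_mull; exact: hg].
Qed.

Definition flip N (i : 'I_N) (x : input N) : input N :=
  [ffun j => if j == i then ~~ x j else x j].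

Lemma flipK N (i : 'I_N) : involutive (flip i).
Proof. by move=> x; apply/ffunP => j; rewrite !ffunE; case: (j == i) => //; rewrite negbK. Qed.

Lemma parity_flip N (S : {set 'I_N}) i x : i \in S -> parity S (flip i x) = ~~ parity S x.
Proof.
move=> hi; rewrite /parity !(bigD1 i hi) /= ffunE eqxx.
have -> : \big[addb/false]_(j in S | j != i) flip i x j = \big[addb/false]_(j in S | j != i) x j.
  by apply: eq_bigr => j /andP [_ hj]; rewrite ffunE (negbTE hj).
by rewrite addNb.
Qed.

Lemma good_full N : good (fun _ : input N => true) N.
Proof.
move=> S.
case: (eqVneq S set0) => [->|hS].
  rewrite (eq_bigr (fun _ => 1)); last by move=> x _; rewrite /chi /parity big_set0.
  by rewrite sumr_const card_ffun card_bool card_ord -natz pmulrn.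
have [i hi] := set0Pn _ hS.
suff -> : \sum_(x | true) chi S x = 0 by apply: dvdz0.
have e := reindex_inj (op := +%R) (x := 0 : int) (P := fun _ => true) (F := chi S) (can_inj (flipK i)).
have e2 : \sum_(j | true) chi S (flip i j) = - \sum_(x | true) chi S x.
  rewrite -sumrN; apply: eq_bigr => x _; rewrite /chi parity_flip //; by case: (parity S x).
have e3 : \sum_(x | true) chi S x = - \sum_(x | true) chi S x by rewrite -e2; exact: e.
lia.
Qed.

Lemma tree_div N (t : qtree N) : forall (P : pred (input N)) k d, good P k ->
  (forall x, P x -> (nqueries t x <= d)%N) ->
  forall S, ((2 ^ (k - d))%N%:Z %| \sum_(x | P x && eval t x) chi S x)%Z.
Proof.
elim: t => [b|T l IHl r IHr] P k d hg hd S /=.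
  case: b hd => hd.
    under eq_bigl => x do rewrite andbT.
    apply: dvdz_trans (hg S); rewrite dvdzE /= dvdn_exp2l //; lia.
  under eq_bigl => x do rewrite andbF.
  by rewrite big_pred0 ?dvdz0.
rewrite (bigID (fun x => parity T x)) /=.
case: d hd => [|d] hd.
  have h0 : forall x, P x = false.
    by move=> x; apply/negP => /hd.
  by rewrite !big_pred0 ?addr0 ?dvdz0 // => x; rewrite h0.
apply: rpredD.
  have := IHr (fun x => P x && (parity T x == true)) k.-1 d (good_restrict T true hg) _ S.
  have -> : (k.-1 - d = k - d.+1)%N by lia.
  have -> : \sum_(x | (P x && (parity T x == true)) && eval r x) chi S x =
            \sum_(x | (P x && (if parity T x then eval r x else eval l x)) && parity T x) chi S x.
    by apply: eq_bigl => x; case: (parity T x); rewrite /= ?andbT ?andbF.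
  apply.
  move=> x /andP [hP /eqP hT]; have := hd x hP; by rewrite /= hT.
have := IHl (fun x => P x && (parity T x == false)) k.-1 d (good_restrict T false hg) _ S.
have -> : (k.-1 - d = k - d.+1)%N by lia.
have -> : \sum_(x | (P x && (parity T x == false)) && eval l x) chi S x =
          \sum_(x | (P x && (if parity T x then eval r x else eval l x)) && ~~ parity T x) chi S x.
  by apply: eq_bigl => x; case: (parity T x); rewrite /= ?andbT ?andbF.
apply.
move=> x /andP [hP /eqP hT]; have := hd x hP; by rewrite /= hT.
Qed.

Lemma ones_sum N (x : input N) : ones x = (\sum_(i | x i) 1)%N.
Proof. by rewrite /ones -sum1_card; apply: eq_bigl => i; rewrite inE. Qed.

Lemma parity_setT N (x : input N) : parity setT x = odd (ones x).
Proof.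
rewrite ones_sum big_mkcond /= (big_morph odd oddD (erefl : odd 0 = false)) /parity.
by apply: eq_big => [i|i _]; rewrite ?in_setT //; case: (x i).
Qed.

Lemma chi_full N (x : input N) : chi setT x = (-1) ^+ (ones x).
Proof. by rewrite /chi parity_setT -signr_odd; case: (odd _); rewrite ?expr0 ?expr1. Qed.

Lemma ones_le N (x : input N) : (ones x <= N)%N.
Proof. by rewrite /ones; have := max_card [set i | x i]; rewrite card_ord. Qed.

Lemma count_sum N (G : nat -> int) :
  \sum_(x : input N) G (ones x) = \sum_(k < N.+1) ('C(N, k))%:R * G k.
Proof.
pose h := fun (A : {set 'I_N}) => ([ffun i => i \in A] : input N).
have hK : forall A, [set i | h A i] = A by move=> A; apply/setP => i; rewrite inE ffunE.
rewrite (reindex h) /=; last first.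
  apply: onW_bij; exists (fun x : input N => [set i | x i]) => // x.
  by apply/ffunP => i; rewrite ffunE inE.
have -> : \sum_(j : {set 'I_N}) G (ones (h j)) = \sum_(j : {set 'I_N}) G #|j|.
  by apply: eq_bigr => A _; rewrite /ones hK.
rewrite (partition_big (fun A : {set 'I_N} => inord #|A| : 'I_N.+1) predT) //=.
apply: eq_bigr => k _.
have -> : \sum_(A : {set 'I_N} | inord #|A| == k) G #|A| = \sum_(A : {set 'I_N} | #|A| == k) G k.
  have hc : forall A : {set 'I_N}, (#|A| < N.+1)%N.
    by move=> A; rewrite ltnS; have := max_card A; rewrite card_ord.
  apply: eq_big => [A|A /eqP <-].
    by rewrite -(inj_eq val_inj) /= inordK.
  by rewrite inordK.
rewrite sumr_const.
have hcard : #|[set A : {set 'I_N} | #|A| == k]| = 'C(N, k) by rewrite card_draws card_ord.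
rewrite mulr_natl; congr (_ *+ _); rewrite -hcard; apply: eq_card => A; by rewrite inE.
Qed.

Lemma alt_aux N n : (0 < N)%N -> forall t, (0 < t)%N -> (t + n = N.+1)%N ->
  \sum_(t <= k < N.+1) (-1) ^+ k * ('C(N, k))%:R = (-1) ^+ t * ('C(N.-1, t.-1))%:R :> int.
Proof.
move=> hN; elim: n => [|n IH] t ht htn.
  rewrite big_geq; last by lia.
  rewrite bin_small ?mulr0 //; lia.
rewrite big_ltn; last by lia.
rewrite IH //; last by lia.
case: N hN htn IH => [|N'] // _ htn _.
case: t ht htn => [|t'] // _ htn /=.
rewrite binS natrD !exprS; ring.
Qed.

Lemma majorityE N (x : input N) : majority x = (N.+1 %/ 2 <= ones x)%N.
Proof.
rewrite /majority -leqNgt; have := ones_le x; move: (ones x) => o ho.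
apply/idP/idP => h; lia.
Qed.

Lemma A_val N : (0 < N)%N ->
  \sum_(x : input N | majority x) chi setT x = (-1) ^+ (N.+1 %/ 2) * ('C(N.-1, (N.+1 %/ 2).-1))%:R.
Proof.
move=> hN.
set t := (N.+1 %/ 2)%N.
pose G := fun k : nat => if (t <= k)%N then (-1) ^+ k else 0 : int.
have -> : \sum_(x : input N | majority x) chi setT x = \sum_(x : input N) G (ones x).
  rewrite big_mkcond; apply: eq_bigr => x _.
  by rewrite majorityE chi_full /G.
rewrite count_sum -(big_mkord xpredT (fun k => ('C(N, k))%:R * G k)).
rewrite (big_cat_nat _ (n := t)) //=; last by rewrite /t; lia.
rewrite (eq_big_nat _ _ (F2 := fun _ => 0)); last first.
  move=> k /andP [_ hk]; rewrite /G leqNgt hk mulr0 //.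
rewrite big1_eq add0r.
rewrite (eq_big_nat _ _ (F2 := fun k => (-1) ^+ k * ('C(N, k))%:R)); last first.
  move=> k /andP [hk _]; rewrite /G hk mulrC //.
apply: (@alt_aux N (N.+1 - t)) => //; rewrite /t; lia.
Qed.

Local Close Scope ring_scope.

Lemma logC_lt N : 0 < N -> logn 2 'C(N.-1, (N.+1 %/ 2).-1) < w N.
Proof.
move=> hN.
have e := odd_double_half N.
set m := N./2 in e.
case: (boolP (odd N)) => ho; [rewrite ho in e | rewrite (negbTE ho) in e].
- rewrite -e /= add1n.
  have -> : (m.*2.+2 %/ 2 = m.+1)%N by rewrite -addnn; lia.
  by rewrite /= logn_central w_doubleS.
- rewrite -e add0n.
  have -> : (m.*2.+1 %/ 2 = m)%N by rewrite -addnn; lia.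
  rewrite w_double.
  case: m e => [|m'] e; first by rewrite -e in hN.
  have hw := w_pos (ltn0Sn m').
  have hC : 'C(m'.+1.*2, m'.+1) = ('C(m'.*2.+1, m')).*2.
    rewrite doubleS binS -{1}[m'.+1](_ : m'.*2.+1 - m' = m'.+1)%N; last by rewrite -addnn; lia.
    by rewrite bin_sub ?addnn // -addnn; lia.
  have hl := logn_central m'.+1.
  rewrite hC logn2_double in hl; last by rewrite bin_gt0 -addnn; lia.
  rewrite doubleS /=; lia.
Qed.

Lemma lower N t : 0 < N -> computes t (@majority N) -> N.+1 - w N <= cost t.
Proof.
move=> hN ht.
have hd : forall x, true -> nqueries t x <= cost t by move=> x _; apply: leq_bigmax.
have := @tree_div N t _ _ _ (@good_full N) hd setT.
rewrite (eq_bigl (fun x => majority x)); last by move=> x; rewrite /= ht.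
rewrite A_val // dvdzE abszMsign !natz !absz_nat.
have hC : 0 < 'C(N.-1, (N.+1 %/ 2).-1) by rewrite bin_gt0; lia.
rewrite pfactor_dvdn //.
have := logC_lt hN; lia.
Qed.

Lemma all_queries_impl N (P Q : {set 'I_N} -> bool) t :
  (forall T, P T -> Q T) -> all_queries P t -> all_queries Q t.
Proof.
move=> hPQ; elim: t => [b|T l IHl r IHr] //= /and3P [h1 h2 h3].
by rewrite hPQ // IHl // IHr.
Qed.

Lemma xor_parity N (t : qtree N) : xor_tree t -> parity_tree t.
Proof.
apply: all_queries_impl => T /orP [] /eqP hT; apply/set0Pn;
  (have : 0 < #|T| by rewrite hT); by move/card_gt0P.
Qed.

Definition s0 N : seq ('I_N * nat) := [seq (i, 0) | i <- enum 'I_N].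

Lemma s0_uniq N : uniq (map fst (s0 N)).
Proof. by rewrite /s0 -map_comp map_id_in ?enum_uniq. Qed.

Lemma s0_size N : size (s0 N) = N.
Proof. by rewrite size_map size_enum_ord. Qed.

Lemma s0_Msum N : Msum (s0 N) = N.
Proof. by rewrite /Msum big_map /= sum1_size size_enum_ord. Qed.

Lemma s0_Psum N (X : input N) : Psum X (s0 N) = ones X.
Proof.
by rewrite /Psum big_map /= ones_sum big_enum_cond.
Qed.

Lemma s0_Inv N (X : input N) : Inv X (s0 N).
Proof.
have hs : Psum X (s0 N) + Qsum X (s0 N) = Msum (s0 N).
  elim: (s0 N) => [|x s IH]; first by rewrite /Psum /Qsum /Msum !big_nil.
  rewrite /Psum /Qsum /Msum !big_cons -/(Psum X s) -/(Qsum X s) -/(Msum s).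
  case: (X x.1) => /=; lia.
rewrite s0_Msum in hs.
have := s0_Psum X; have := ones_le X; rewrite /Inv; lia.
Qed.


End LB.
Import LB.

Theorem mainTheorem12 (N : nat) (hN : 1 <= N) :
  D_PARITY_is (@majority N) (N.+1 - w N) /\ D_XOR_is (@majority N) (N.+1 - w N).
Proof.
set t0 := build N (s0 N).
have hv : xor_tree t0 by apply: build_valid; apply: s0_uniq.
have hc : computes t0 (@majority N).
  move=> X; rewrite /t0; apply: build_correct; [by rewrite s0_size | exact: s0_uniq | exact: s0_Inv].
have hcost : cost t0 = N.+1 - w N.
  apply/eqP; rewrite eqn_leq lower // andbT.
  apply/bigmax_leqP => X _; have := build_cost N (s0 N) X.
  by rewrite s0_size s0_Msum addn1.
split; split.
- by exists t0; split=> //; apply: xor_parity.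
- by move=> t _ ht; apply: lower.
- by exists t0.
- by move=> t _ ht; apply: lower.
Qed.
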